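(* Let $A, B \in\mathbb{C}^{n\times n}$ be matrices of index at most $1$. Then $A\leq^{1GD}B$ if and only if $A\,\#\!\leq B$, where $A\,\#\!\leq B$ (left sharp partial order) means $A^2=AB$ and $R(A)\subseteq R(B)$.
   Context: For $A\in\mathbb{C}^{n\times n}$, $ind(A)$ is the smallest nonnegative integer $k$ with $\mathrm{rank}(A^k)=\mathrm{rank}(A^{k+1})$. $A\{1\}$ is the set of matrices $X$ with $AXA=A$. With $k=ind(A)$, $A\{GD\}$ is the set of matrices $X$ with $AXA=A$, $XA^{k+1}=A^k$, $A^{k+1}X=A^k$ (G-Drazin inverses). A 1GD inverse of $A$ is a matrix $A^{1GD}=A^{-}AA^{GD}$ with $A^-\in A\{1\}$, $A^{GD}\in A\{GD\}$. We write $A\leq^{1GD}B$ if $AA^{1GD}=BA^{1GD}$ and $A^{1GD}A=A^{1GD}B$ for some 1GD inverse $A^{1GD}$ of $A$. $R(\cdot)$ denotes range. *)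

(* Defs.v *)
From HB Require Import structures.
From mathcomp Require Import all_boot all_order all_algebra.
From mathcomp Require Import complex.
From mathcomp Require Import Rstruct.
Set Implicit Arguments. Unset Strict Implicit. Unset Printing Implicit Defensive.
Import GRing.Theory.
Local Open Scope ring_scope.

Definition C : fieldType := complex.complex Rdefinitions.R.

Fixpoint mxpow (n : nat) (A : 'M[C]_n) (k : nat) : 'M[C]_n :=
  match k with 0 => 1%:M | k'.+1 => A *m mxpow A k' end.

Definition is_ind (n : nat) (A : 'M[C]_n) (k : nat) : Prop :=
  \rank (mxpow A k) = \rank (mxpow A k.+1) /\
  (forall j, (j < k)%N -> \rank (mxpow A j) <> \rank (mxpow A j.+1)).

Definition ind_le1 (n : nat) (A : 'M[C]_n) : Prop :=
  exists k, is_ind A k /\ (k <= 1)%N.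

Definition inner_inv (n : nat) (A X : 'M[C]_n) : Prop := A *m X *m A = A.

Definition gd_inv (n : nat) (A X : 'M[C]_n) : Prop :=
  exists k, is_ind A k /\
    A *m X *m A = A /\
    X *m mxpow A k.+1 = mxpow A k /\
    mxpow A k.+1 *m X = mxpow A k.

Definition inv_1GD (n : nat) (A Y : 'M[C]_n) : Prop :=
  exists A1 AGD, inner_inv A A1 /\ gd_inv A AGD /\ Y = A1 *m A *m AGD.

Definition le_1GD (n : nat) (A B : 'M[C]_n) : Prop :=
  exists Y, inv_1GD A Y /\ A *m Y = B *m Y /\ Y *m A = Y *m B.

(* R(A) \subseteq R(B) for the ranges (column spaces); mathcomp's (_ <= _)%MS
   compares row spaces, so we transpose. *)
Definition range_sub (n : nat) (A B : 'M[C]_n) : bool := (A^T <= B^T)%MS.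

Definition left_sharp_le (n : nat) (A B : 'M[C]_n) : Prop :=
  A *m A = A *m B /\ range_sub A B.

(* Main.v *)
Require Import Defs.
From mathcomp Require Import all_boot all_algebra.
Set Implicit Arguments. Unset Strict Implicit. Unset Printing Implicit Defensive.
Import GRing.Theory.
Local Open Scope ring_scope.

Lemma is_ind_le1 (n : nat) (A : 'M[C]_n) k :
  ind_le1 A -> is_ind A k -> (k <= 1)%N.
Proof.
case=> k' [[Hk' _] Hle] [_ Hk].
case: (leqP k 1) => // H; exfalso.
by apply: (Hk k') => //; apply: leq_ltn_trans Hle H.
Qed.

Lemma gd_props (n : nat) (A X : 'M[C]_n) :
  ind_le1 A -> gd_inv A X -> A *m X *m A = A /\ A *m X = X *m A.
Proof.
move=> HA [k [Hk [H1 [H2 H3]]]]; split => //.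
have := is_ind_le1 HA Hk; case: k {Hk} H2 H3 => [|[|//]] /= H2 H3 _.
  by rewrite mulmx1 in H2 H3; rewrite H2 H3.
rewrite !mulmx1 in H2 H3.
have e1 : A *m X = X *m A *m A *m X by rewrite -(mulmxA X A A) H2.
have e2 : X *m A = X *m A *m A *m X by rewrite -!mulmxA (mulmxA A A X) H3.
by rewrite e1 -e2.
Qed.

Lemma gd_exists (n : nat) (A : 'M[C]_n) :
  ind_le1 A -> exists X, gd_inv A X.
Proof.
case=> k [Hk Hle]; move: (Hk) => [Hr _].
case: k Hle Hk Hr => [|[|//]] _ Hk /= Hr.
  have HU : A \in unitmx.
    by rewrite -row_full_unit /row_full -(mulmx1 A) -Hr mxrank1.
  exists (invmx A), 0%N; split => //=; rewrite !mulmx1 mulmxV // mulVmx //.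
  by rewrite mul1mx.
rewrite !mulmx1 in Hr.
have S1 : (A <= A *m A)%MS.
  have [_ H2] := mxrank_leqif_sup (submxMl A A); rewrite Hr eqxx in H2.
  by rewrite -H2.
have S2 : (A^T <= (A *m A)^T)%MS.
  have [_ H2] := mxrank_leqif_sup (submxMl A^T A^T).
  rewrite !mxrank_tr -trmx_mul mxrank_tr Hr eqxx in H2.
  by rewrite -H2.
case/submxP: S1 => Z Zl.
case/submxP: S2 => Z' HZ'.
have Zr : A = A *m A *m Z'^T.
  by have := congr1 trmx HZ'; rewrite trmxK trmx_mul trmxK.
rewrite mulmxA in Zl.
set W := Z'^T in Zr.
have E1 : A *m W *m A = A.
  rewrite {1}Zl -(mulmxA (Z *m A)) -(mulmxA Z) (mulmxA A A W) -Zr.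
  by rewrite -Zl.
have E2 : A *m Z *m A = A.
  rewrite {2}Zr !mulmxA -(mulmxA A Z A) -(mulmxA A (Z *m A) A) -Zl.
  by rewrite -Zr.
exists (Z *m A *m W), 1%N; split => //=; rewrite !mulmx1.
split; first by rewrite !mulmxA E2 E1.
split.
  rewrite !mulmxA -(mulmxA Z A W) -(mulmxA Z (A *m W) A) E1.
  by rewrite -Zl.
rewrite !mulmxA -(mulmxA A A Z) -(mulmxA A (A *m Z) A) E2.
by rewrite -Zr.
Qed.

Theorem theorem3p14 (n : nat) (A B : 'M[C]_n) :
  ind_le1 A -> ind_le1 B -> (le_1GD A B <-> left_sharp_le A B).
Proof.
move=> HA _; split.
  case=> Y [[A1 [X [HA1 [HX HY]]]] [H1 H2]].
  have [HAXA HC] := gd_props HA HX.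
  rewrite /inner_inv in HA1.
  have e : A = A *m X *m B.
    have := congr1 (mulmx A) H2; rewrite HY !mulmxA HA1 HAXA.
    by [].
  split.
    rewrite {2}e !mulmxA -(mulmxA A A X) HC mulmxA HAXA //.
  have := congr1 (mulmx^~ A) H1; rewrite HY /= !mulmxA HA1 HAXA.
  rewrite -(mulmxA (B *m A1) A X) -(mulmxA (B *m A1) (A *m X) A) HAXA => e'.
  by rewrite /range_sub e' -mulmxA trmx_mul submxMl.
case=> e1 /submxP [D HD].
have hW : A = B *m D^T.
  by have := congr1 trmx HD; rewrite trmxK trmx_mul trmxK.
set W := D^T in hW.
have [X HX] := gd_exists HA.
have [HAXA HC] := gd_props HA HX.
have f1 : A *m A *m W = A *m A by rewrite {1}e1 -mulmxA -hW.
have g : X *m A = X *m X *m A *m A.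
  have h : X *m (X *m A) = X *m (A *m X) by rewrite HC.
  by rewrite -(mulmxA X X A) h -(mulmxA X (A *m X) A) HAXA.
have f2 : X *m A *m W = X *m A.
  by rewrite {1}g -!mulmxA (mulmxA A A W) f1 !mulmxA -g.
pose A1 := X + (1%:M - X *m A) *m W *m X.
have i1 : A *m A1 *m A = A.
  rewrite /A1 mulmxDr mulmxDl HAXA !mulmxA mulmxBr mulmx1 mulmxA HAXA subrr.
  by rewrite !mul0mx addr0.
have i2 : B *m A1 *m A = A.
  rewrite /A1 mulmxDr mulmxDl !mulmxA mulmxBr mulmx1 !mulmxBl !mulmxA.
  rewrite -hW HAXA -(mulmxA B X A) -(mulmxA B (X *m A) W) f2 mulmxA.
  rewrite -(mulmxA (B *m X) A X) -(mulmxA (B *m X) (A *m X) A) HAXA.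
  by rewrite addrC subrK.
have i3 : A *m X *m B = A.
  by rewrite HC -mulmxA -e1 mulmxA -HC HAXA.
exists (A1 *m A *m X); split.
  by exists A1, X.
split.
  by rewrite !mulmxA i1 i2.
by rewrite -!(mulmxA A1) HAXA i3.
Qed.
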